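(* For every twin-free bipartite graph $G$ of order $n$, we have $i_{\max}(G) \ge \lfloor n/2\rfloor+1$, and this inequality is sharp.
   Context: $i_{\max}(G)$ denotes the number of maximal independent sets of $G$. A graph is twin-free if no two vertices have the same open neighbourhood. *)

(* Defs.v *)
From mathcomp Require Import all_boot.
Set Implicit Arguments. Unset Strict Implicit. Unset Printing Implicit Defensive.

Definition simple_graph (T : finType) (e : rel T) : Prop :=
  symmetric e /\ irreflexive e.

Definition bipartite (T : finType) (e : rel T) : Prop :=
  exists A : {set T}, forall x y, e x y -> (x \in A) != (y \in A).

Definition nbhd (T : finType) (e : rel T) (x : T) : {set T} := [set y | e x y].

Definition twin_free (T : finType) (e : rel T) : Prop :=
  forall x y, nbhd e x = nbhd e y -> x = y.

Definition independent (T : finType) (e : rel T) (S : {set T}) : bool :=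
  [forall x in S, forall y in S, ~~ e x y].

Definition maximal_independent (T : finType) (e : rel T) (S : {set T}) : bool :=
  independent e S && [forall S' : {set T}, (S \proper S') ==> ~~ independent e S'].

Definition imax (T : finType) (e : rel T) : nat :=
  #|[set S : {set T} | maximal_independent e S]|.

(* Main.v *)
Require Import Defs.
From mathcomp Require Import all_boot.
From mathcomp Require Import zify.

Set Implicit Arguments. Unset Strict Implicit. Unset Printing Implicit Defensive.

Section General.
Variables (T : finType) (e : rel T).

Lemma dom_max (S : {set T}) : independent e S ->
  (forall z, z \notin S -> exists2 w, w \in S & e z w) -> maximal_independent e S.
Proof.
move=> hI hD; apply/andP; split => //.
apply/forallP => S'; apply/implyP => /properP [sub [z zS' znS]].
have [w wS ezw] := hD z znS.
apply/negP => /forallP /(_ z) /implyP /(_ zS') /forallP /(_ w) /implyP.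
by move=> /(_ (subsetP sub w wS)); rewrite ezw.
Qed.

Lemma indepP (S : {set T}) x y : independent e S -> x \in S -> y \in S -> e x y = false.
Proof.
move=> /forallP /(_ x) /implyP H xS yS.
by move: (H xS) => /forallP /(_ y) /implyP /(_ yS) /negbTE.
Qed.

Lemma mis_dom (S : {set T}) z : simple_graph e -> maximal_independent e S ->
  z \notin S -> exists2 w, w \in S & e z w.
Proof.
move=> [sy ir] /andP [hI /forallP /(_ (z |: S)) /implyP hM] zS.
case: (boolP [exists w in S, e z w]) => [/existsP [w /andP [wS ezw]]|hn].
  by exists w.
exfalso; have : ~~ independent e (z |: S).
  by apply: hM; rewrite properUr // sub1set.
apply/negP; rewrite negbK.
apply/forallP => x; apply/implyP => xS; apply/forallP => y; apply/implyP => yS.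
move: xS yS; rewrite !in_setU1 => /orP [/eqP ->|xS] /orP [/eqP ->|yS].
- by rewrite ir.
- by apply/negP => ezy; move/existsP: hn; apply; exists y; rewrite yS.
- by apply/negP => eyz; move/existsP: hn; apply; exists x; rewrite xS sy.
- by rewrite (indepP hI xS yS).
Qed.

Definition Ms (P K : {set T}) : {set T} :=
  K :|: [set w | (w \notin P) && [forall u in K, ~~ e w u]].

Hypothesis sy : symmetric e.

Lemma Ms_mis (P K : {set T}) :
  (forall x y, e x y -> (x \in P) != (y \in P)) -> K \subset P ->
  (forall u, u \in P -> u \notin K -> exists2 w, w \in Ms P K & e u w) ->
  maximal_independent e (Ms P K).
Proof.
move=> hP hK hD; apply: dom_max.
  apply/forallP => x; apply/implyP => xM; apply/forallP => y; apply/implyP => yM.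
  apply/negP => exy; move: (hP _ _ exy) xM yM.
  rewrite !inE => hne /orP [xK|/andP [xP /forallP hx]] /orP [yK|/andP [yP /forallP hy]].
  - by rewrite (subsetP hK _ xK) (subsetP hK _ yK) in hne.
  - by move: (hy x); rewrite xK sy exy.
  - by move: (hx y); rewrite yK exy.
  - by rewrite (negbTE xP) (negbTE yP) in hne.
move=> z; case: (boolP (z \in P)) => zP.
  move=> zM; apply: hD => //; apply: contra zM; rewrite inE => ->; done.
rewrite !inE negb_or zP /= => /andP [zK]; rewrite negb_forall => /existsP [u].
rewrite negb_imply negbK => /andP [uK ezu]; exists u => //.
by rewrite inE uK.
Qed.

Lemma Ms_int (P K : {set T}) : K \subset P -> Ms P K :&: P = K.
Proof.
move=> hK; apply/setP => x; rewrite !inE.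
case: (boolP (x \in K)) => xK /=; first by rewrite (subsetP hK _ xK).
by case: (x \in P); rewrite ?andbF.
Qed.

Variable A : {set T}.
Hypothesis hA : forall x y, e x y -> (x \in A) != (y \in A).

Lemma hAc : forall x y, e x y -> (x \in ~: A) != (y \in ~: A).
Proof. by move=> x y /hA; rewrite !inE; case: (x \in A); case: (y \in A). Qed.

Definition part (v : T) : {set T} := if v \in A then ~: A else A.
Definition Kv (v : T) : {set T} := [set u in part v | ~~ e v u].
Definition M (v : T) := Ms (part v) (Kv v).

Lemma part_cross v : forall x y, e x y -> (x \in part v) != (y \in part v).
Proof. rewrite /part; case: (v \in A); [exact: hAc | exact: hA]. Qed.

Lemma v_notin_part v : v \notin part v.
Proof. by rewrite /part; case: (boolP (v \in A)) => h; rewrite ?inE ?h. Qed.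

Lemma Kv_sub v : Kv v \subset part v.
Proof. by apply/subsetP => u; rewrite inE => /andP []. Qed.

Lemma M_mis v : maximal_independent e (M v).
Proof.
apply: Ms_mis; [exact: part_cross | exact: Kv_sub |].
move=> u uP; rewrite inE uP /= negbK => evu; exists v; last by rewrite sy.
rewrite !inE v_notin_part /=; apply/orP; right.
by apply/forallP => w; apply/implyP; rewrite inE => /andP [].
Qed.

Lemma M_nbhd v v' : (v \in A) = (v' \in A) -> M v = M v' -> nbhd e v = nbhd e v'.
Proof.
move=> hvv' hM.
have hp : part v = part v' by rewrite /part hvv'.
have hK : Kv v = Kv v'.
  by rewrite -(Ms_int (Kv_sub v)) -(Ms_int (Kv_sub v')) -/(M v) -/(M v') hM hp.
apply/setP => u; rewrite !inE.
case: (boolP (u \in part v)) => uP.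
  have := congr1 (fun S : {set T} => u \in S) hK; rewrite /= !inE -hp uP /=.
  by case: (e v u); case: (e v' u).
have h1 : e v u = false.
  by apply/negP => /(part_cross v); rewrite (negbTE (v_notin_part v)) (negbTE uP).
have h2 : e v' u = false.
  by apply/negP => /(part_cross v'); rewrite (negbTE (v_notin_part v')) -hp (negbTE uP).
by rewrite h1 h2.
Qed.

Lemma M_full v : Ms (part v) (part v) = M v -> nbhd e v = set0.
Proof.
move=> hM.
have hK : Kv v = part v.
  by rewrite -(Ms_int (Kv_sub v)) -/(M v) -hM Ms_int.
apply/setP => u; rewrite !inE.
case: (boolP (u \in part v)) => uP.
  by move: uP; rewrite -{1}hK inE => /andP [_ /negbTE].
by apply/negP => /(part_cross v); rewrite (negbTE (v_notin_part v)) (negbTE uP).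
Qed.

Lemma Mfull_mis (P : {set T}) : (forall x y, e x y -> (x \in P) != (y \in P)) ->
  maximal_independent e (Ms P P).
Proof. by move=> hP; apply: Ms_mis => // u ->. Qed.

Lemma general_bound : twin_free e -> #|T| + 1 <= 2 * imax e.
Proof.
move=> tf.
set F := [set S | maximal_independent e S].
have injA : {in A &, injective M}.
  by move=> v v' vA v'A hM; apply: tf; apply: M_nbhd => //; rewrite vA v'A.
have injB : {in ~: A &, injective M}.
  move=> v v' vA v'A hM; apply: tf; apply: M_nbhd => //.
  by move: vA v'A; rewrite !inE => /negbTE -> /negbTE ->.
have cA := card_in_imset injA.
have cB := card_in_imset injB.
have subI (X : {set T}) : M @: X \subset F.
  by apply/subsetP => S /imsetP [v _ ->]; rewrite inE M_mis.
have hT : #|A| + #|~: A| = #|T| by rewrite cardsC.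
have lA := subset_leq_card (subI A).
have lB := subset_leq_card (subI (~: A)).
suff : (#|M @: A| < #|F|) || (#|M @: ~: A| < #|F|).
  rewrite /imax -/F; move=> /orP [h|h]; lia.
case: (boolP (Ms A A \in M @: ~: A)) => [/imsetP [v vB hv]|hn]; last first.
  apply/orP; right; apply: proper_card; apply/properP; split; first exact: subI.
  by exists (Ms A A) => //; rewrite inE Mfull_mis.
case: (boolP (Ms (~: A) (~: A) \in M @: A)) => [/imsetP [v' vA hv']|hn]; last first.
  apply/orP; left; apply: proper_card; apply/properP; split; first exact: subI.
  by exists (Ms (~: A) (~: A)) => //; rewrite inE Mfull_mis //; exact: hAc.
exfalso.
have pv : part v = A by rewrite /part; move: vB; rewrite inE => /negbTE ->.
have pv' : part v' = ~: A by rewrite /part vA.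
have h1 := M_full (v := v); rewrite pv in h1; have := h1 hv.
have h2 := M_full (v := v'); rewrite pv' in h2; have := h2 hv'.
move=> e2 e1; have : v = v' by apply: tf; rewrite e1 e2.
by move=> eq; move: vB; rewrite inE eq vA.
Qed.

End General.

Section Example.
Variable n : nat.

Definition he : rel 'I_n := fun x y : 'I_n =>
  (~~ odd x && odd y && (x < y)) || (~~ odd y && odd x && (y < x)).

Lemma he_sym : symmetric he.
Proof. by move=> x y; rewrite /he orbC. Qed.

Lemma he_irr : irreflexive he.
Proof. by move=> x; rewrite /he ltnn !andbF. Qed.

Lemma he_simple : simple_graph he.
Proof. split; [exact: he_sym | exact: he_irr]. Qed.

Definition Aev : {set 'I_n} := [set x : 'I_n | ~~ odd x].

Lemma he_cross (x y : 'I_n) : he x y -> (x \in Aev) != (y \in Aev).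
Proof.
rewrite /he !inE => /orP [/andP [/andP [hx hy] _]|/andP [/andP [hy hx] _]].
  by rewrite hx hy.
by rewrite hx hy.
Qed.

Lemma he_bip : bipartite he.
Proof. by exists Aev; exact: he_cross. Qed.

Lemma he_key (x y : 'I_n) : x < y -> exists z : 'I_n, he x z != he y z.
Proof.
move=> xy.
case: (boolP (odd x)) => ox; case: (boolP (odd y)) => oy.
- have hz : y.-1 < n by have := ltn_ord y; lia.
  exists (Ordinal hz); rewrite /he /=.
  have -> : odd y.-1 = false by lia.
  rewrite ox oy /=. apply/negP => /eqP; lia.
- have hz : x.-1 < n by have := ltn_ord x; lia.
  exists (Ordinal hz); rewrite /he /=.
  have -> : odd x.-1 = false by lia.
  rewrite ox (negbTE oy) /=. apply/negP => /eqP; lia.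
- exists y; rewrite /he (negbTE ox) oy xy ltnn /=.
  by rewrite ?andbF ?andbT ?orbF.
- have hz : x.+1 < n by have := ltn_ord y; lia.
  exists (Ordinal hz); rewrite /he /=.
  rewrite (negbTE ox) (negbTE oy) /=. 
  rewrite !orbF ltnSn; apply/negP => /eqP; lia.
Qed.

Lemma he_tf : twin_free he.
Proof.
have H (x y : 'I_n) : x < y -> nbhd he x = nbhd he y -> False.
  move=> /he_key [z hz] hn.
  have := congr1 (fun S : {set 'I_n} => z \in S) hn; rewrite /= !inE => h.
  by rewrite h eqxx in hz.
move=> x y hn; case: (ltngtP x y) => hxy.
- by case: (H _ _ hxy hn).
- by case: (H _ _ hxy (esym hn)).
- exact: val_inj.
Qed.

Definition St (t : nat) : {set 'I_n} := [set v : 'I_n | odd v == (v < t.*2)].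

Lemma St_mis t : t <= n./2 -> maximal_independent he (St t).
Proof.
move=> ht; apply: dom_max.
  apply/forallP => x; apply/implyP; rewrite inE => /eqP hx.
  apply/forallP => y; apply/implyP; rewrite inE => /eqP hy.
  rewrite /he; apply/negP => /orP [/andP [/andP [h1 h2] h3]|/andP [/andP [h1 h2] h3]].
  + rewrite (negbTE h1) h2 in hx hy; lia.
  + rewrite (negbTE h1) h2 in hx hy; lia.
move=> z; rewrite inE => hz.
case: (boolP (odd z)) => oz.
  rewrite oz in hz.
  have hw : z.-1 < n by have := ltn_ord z; lia.
  exists (Ordinal hw); rewrite ?inE /=.
    lia.
  rewrite /he /=; lia.
rewrite (negbTE oz) in hz.
have hw : z.+1 < n by have := ltn_ord z; lia.
exists (Ordinal hw); rewrite ?inE /=.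
  lia.
rewrite /he /=; lia.
Qed.

Lemma St_inj : injective (fun t : 'I_(n./2).+1 => St t).
Proof.
have H (t t' : 'I_(n./2).+1) : t < t' -> St t = St t' -> False.
  move=> tt' hS.
  have hv : (nat_of_ord t).*2 < n by have := ltn_ord t'; lia.
  have := congr1 (fun S : {set 'I_n} => Ordinal hv \in S) hS.
  rewrite /= !inE odd_double ltnn /=; lia.
move=> t t' hS; case: (ltngtP t t') => h.
- by case: (H _ _ h hS).
- by case: (H _ _ h (esym hS)).
- exact: val_inj.
Qed.

Lemma mis_St (S : {set 'I_n}) : maximal_independent he S ->
  exists t : 'I_(n./2).+1, S = St t.
Proof.
move=> hS.
have hI : independent he S by case/andP: hS.
pose P t := [forall v : 'I_n, (nat_of_ord v == t.*2) ==> (v \in S)].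
have exP : exists t, P t.
  by exists n; apply/forallP => v; apply/implyP => /eqP hv; have := ltn_ord v; lia.
pose t0 := ex_minn exP.
have Pt0 : P t0 by rewrite /t0; case: ex_minnP.
have mint0 : forall s, s < t0 -> ~~ P s.
  move=> s; rewrite /t0; case: ex_minnP => m _ hm hs; apply/negP => Ps.
  by have := hm _ Ps; lia.
have notS : forall v : 'I_n, ~~ odd v -> v < t0.*2 -> v \notin S.
  move=> v ov vt; have := mint0 (v./2) ltac:(lia).
  apply: contra => vS; apply/forallP => u; apply/implyP => /eqP hu.
  by have -> : u = v by apply: val_inj; rewrite /= hu; lia.
have inS : forall v : 'I_n, nat_of_ord v = t0.*2 -> v \in S.
  by move=> v hv; move/forallP: Pt0 => /(_ v) /implyP; apply; rewrite hv.
have t0le : t0 <= n./2.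
  case: (leqP t0 n./2) => // hlt; exfalso.
  have hv : (n./2).*2 < n.
    have := mint0 (n./2) hlt; rewrite negb_forall => /existsP [v].
    rewrite negb_imply => /andP [/eqP hv _]; have := ltn_ord v; lia.
  have vS := notS (Ordinal hv) ltac:(rewrite /= odd_double //) ltac:(rewrite /=; lia).
  have [w _ hw] := mis_dom he_simple hS vS.
  move: hw; rewrite /he /= => hw.
  have := ltn_ord w; lia.
exists (Ordinal (n := (n./2).+1) (m := t0) ltac:(lia)).
apply/setP => v; rewrite inE /=.
case: (boolP (odd v)) => ov; case: (ltnP v t0.*2) => hv /=.
-
  apply/negP => /negP vS; have [w wS hw] := mis_dom he_simple hS vS.
  move: hw; rewrite /he /= => hw.
  have ow : ~~ odd w by lia.
  have := notS w ow ltac:(lia); by rewrite wS.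
-
  have hu : t0.*2 < n by have := ltn_ord v; lia.
  apply/negP => vS; have uS := inS (Ordinal hu) erefl.
  have := indepP hI uS vS; rewrite /he /=; lia.
- by apply/negbTE/notS => //; rewrite ov.
-
  have hu : t0.*2 < n by have := ltn_ord v; lia.
  have uS := inS (Ordinal hu) erefl.
  apply/negP => /negP vS; have [w wS hw] := mis_dom he_simple hS vS.
  move: hw; rewrite /he /= => hw.
  have := indepP hI uS wS; rewrite /he /=; lia.
Qed.

Lemma he_imax : imax he = n./2 + 1.
Proof.
rewrite /imax.
have -> : [set S | maximal_independent he S] = (fun t : 'I_(n./2).+1 => St t) @: [set: 'I_(n./2).+1].
  apply/setP => S; rewrite inE; apply/idP/imsetP.
    by move=> /mis_St [t ->]; exists t; rewrite ?inE.
  by move=> [t _ ->]; apply: St_mis; have := ltn_ord t; lia.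
rewrite card_imset; last exact: St_inj.
by rewrite cardsT card_ord addn1.
Qed.

End Example.

Theorem corollary3p2 :
  (forall (T : finType) (e : rel T),
      simple_graph e -> bipartite e -> twin_free e ->
      #|T| %/ 2 + 1 <= imax e)
  /\
  (forall n : nat, exists e : rel 'I_n,
      [/\ simple_graph e, bipartite e, twin_free e & imax e = n %/ 2 + 1]).
Proof.
split.
  move=> T e [sy _] [A hA] tf.
  have := general_bound sy hA tf; lia.
move=> n; exists (@he n); split.
- exact: (@he_simple n).
- exact: (@he_bip n).
- exact: (@he_tf n).
- by rewrite (@he_imax n); lia.
Qed.
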